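(* Let $G$ be a $k$-uniform $s$-cycle with $k\ge 3$ and $\frac{k}{2}<s<k-1$, and write $k=q(k-s)+r$ with integers $q$ and $1\le r<k-s$. Then $\lambda(\mathcal{Q})=q+1+(q+1)\alpha_*^{k-(q+1)r}$, where $\alpha_*$ is the unique root in $(0,1)$ of $(q+1)\alpha^k+\alpha^{(q+1)r}-q=0$. When $k$ is even, also $\lambda(\mathcal{L})=q+1+(q+1)\alpha_*^{k-(q+1)r}$.
   Context: A $k$-uniform $s$-cycle with $m$ edges has vertex set $\mathbb{Z}_n$, $n=m(k-s)$ (vertex $n+i$ identified with $i$), and edges $e_j=\{j(k-s)+1,\ldots,j(k-s)+k\}$, $j=0,\ldots,m-1$; it is assumed that $n\ge 2k-s$. The degree $d_i$ of a vertex is the number of edges containing it. For a real tensor $\mathcal{T}$ of order $k$ and dimension $n$, $\lambda\in\mathbb{R}$ is an H-eigenvalue if there is nonzero $\mathbf{x}\in\mathbb{R}^n$ with $(\mathcal{T}\mathbf{x}^{k-1})_i=\lambda x_i^{k-1}$ for all $i$, where $(\mathcal{T}\mathbf{x}^{k-1})_i=\sum_{i_2,\ldots,i_k}t_{ii_2\ldots i_k}x_{i_2}\cdots x_{i_k}$; $\lambda(\mathcal{T})$ is the largest H-eigenvalue. The adjacency tensor $\mathcal{A}$ has entries $1/(k-1)!$ at $(i_1,\ldots,i_k)$ with $\{i_1,\ldots,i_k\}$ an edge and $0$ otherwise; $\mathcal{D}$ is diagonal with entries $d_i$; $\mathcal{L}=\mathcal{D}-\mathcal{A}$, $\mathcal{Q}=\mathcal{D}+\mathcal{A}$.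 *)

(* Defs.v *)
From HB Require Import structures.
From mathcomp Require Import all_boot all_order all_algebra.
From mathcomp Require Import reals.
Set Implicit Arguments. Unset Strict Implicit. Unset Printing Implicit Defensive.
Import Order.TTheory GRing.Theory Num.Theory.
Local Open Scope ring_scope.

(* A real tensor of order k and dimension n: entry t_{i i_2 ... i_k} is
   [T i g] where g : 'I_(k-1) -> 'I_n lists the indices i_2,...,i_k. *)
Definition tensor (R : Type) (k n : nat) := 'I_n -> {ffun 'I_k.-1 -> 'I_n} -> R.

Definition tapp (R : realType) (k n : nat) (T : tensor R k n) (x : 'I_n -> R)
  (i : 'I_n) : R :=
  \sum_(g : {ffun 'I_k.-1 -> 'I_n}) T i g * \prod_(t : 'I_k.-1) x (g t).

Definition is_Heig (R : realType) (k n : nat) (T : tensor R k n) (l : R) : Prop :=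
  exists x : 'I_n -> R, (exists i, x i != 0) /\
    forall i, tapp T x i = l * x i ^+ k.-1.

Definition is_largest_Heig (R : realType) (k n : nat) (T : tensor R k n) (l : R)
  : Prop :=
  is_Heig T l /\ forall mu, is_Heig T mu -> mu <= l.

(* k-uniform s-cycle with m edges on Z_n, n = m(k-s); vertex label v is
   identified with v mod n;  e_j = {j(k-s)+1, ..., j(k-s)+k}. *)
Definition scyc_n (k s m : nat) : nat := (m * (k - s))%N.

Definition scyc_edge (k s m : nat) (j : nat) : {set 'I_(scyc_n k s m)} :=
  [set v : 'I_(scyc_n k s m) |
     [exists t : 'I_k, ((j * (k - s) + t.+1) %% scyc_n k s m)%N == v]].

Definition scyc_deg {k s m : nat} (v : 'I_(scyc_n k s m)) : nat :=
  #|[set j : 'I_m | v \in scyc_edge k s m j]|.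

Definition scyc_adj (R : realType) (k s m : nat) : tensor R k (scyc_n k s m) :=
  fun i g =>
    if [exists j : 'I_m, (i |: [set g t | t : 'I_k.-1]) == scyc_edge k s m j]
    then ((k.-1)`!%:R)^-1 else 0.

Definition scyc_degt (R : realType) (k s m : nat) : tensor R k (scyc_n k s m) :=
  fun i g => if [forall t, g t == i] then (scyc_deg i)%:R else 0.

Definition scyc_Q (R : realType) (k s m : nat) : tensor R k (scyc_n k s m) :=
  fun i g => @scyc_degt R k s m i g + @scyc_adj R k s m i g.

Definition scyc_L (R : realType) (k s m : nat) : tensor R k (scyc_n k s m) :=
  fun i g => @scyc_degt R k s m i g - @scyc_adj R k s m i g.

(* Main.v *)
Require Import Defs.
From HB Require Import structures.
From mathcomp Require Import all_boot all_order all_algebra.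
From mathcomp Require Import reals zify ring.
Import Order.TTheory GRing.Theory Num.Theory.

Local Open Scope ring_scope.
Section Gen.
Variables (R : realType) (k n : nat).
Implicit Types (T Q : tensor R k n).

Lemma tapp_abs_le T Q x i : (forall g, `|T i g| <= Q i g) ->
  `|tapp T x i| <= tapp Q (fun v => `|x v|) i.
Proof.
move=> hTQ; rewrite /tapp; apply: le_trans (ler_norm_sum _ _ _) _.
apply: ler_sum => g _; rewrite normrM normr_prod.
by apply: ler_wpM2r => //; apply: prodr_ge0 => t _.
Qed.

Lemma tapp_mono Q x y i (t : R) : (forall g, 0 <= Q i g) ->
  (forall v, 0 <= x v <= t * y v) -> tapp Q x i <= t ^+ k.-1 * tapp Q y i.
Proof.
move=> hQ hxy; rewrite /tapp mulr_sumr; apply: ler_sum => g _.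
rewrite mulrCA; apply: ler_wpM2l => //.
have -> : t ^+ k.-1 * \prod_(u < k.-1) y (g u) = \prod_(u < k.-1) (t * y (g u)).
  by rewrite big_split /= prodr_const card_ord.
by apply: ler_prod => u _; apply: hxy.
Qed.

Lemma Heig_upper T Q rho y :
  (forall i g, `|T i g| <= Q i g) -> (forall v, 0 < y v) ->
  (forall i, tapp Q y i = rho * y i ^+ k.-1) ->
  forall mu, is_Heig T mu -> mu <= rho.
Proof.
move=> hTQ hy hQy mu [x [[i0 hi0] hx]].
pose F v := `|x v| / y v.
case: (@arg_maxP _ R _ i0 predT F isT) => j _ himax.
have Fpos : 0 < F j.
  apply: lt_le_trans (himax i0 isT); rewrite /F divr_gt0 ?normr_gt0 //.
have xj : `|x j| = F j * y j by rewrite /F divfK // gt_eqF.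
have Q0 : forall g, 0 <= Q j g by move=> g; exact: le_trans (normr_ge0 (T j g)) (hTQ j g).
have h1 : `|mu| * `|x j| ^+ k.-1 <= rho * `|x j| ^+ k.-1.
  rewrite -normrX -normrM -hx; apply: le_trans (@tapp_abs_le T Q x j (hTQ j)) _.
  apply: le_trans (@tapp_mono Q _ y j (F j) Q0 _) _.
    move=> v; rewrite normr_ge0 /=.
    by have := himax v isT; rewrite /F /= ler_pdivrMr.
  by rewrite hQy normrX; move: (F j) xj => Fj ->; rewrite exprMn mulrCA.
apply: le_trans (ler_norm _) _.
by move: h1; rewrite ler_pM2r // exprn_gt0 // xj mulr_gt0.
Qed.
End Gen.
Local Close Scope ring_scope.

Section Comb.
Variables (k n : nat).
Local Notation img g := [set (g : {ffun 'I_k.-1 -> 'I_n}) t | t : 'I_k.-1].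

Lemma img_card g : #|img g| <= k.-1.
Proof. by rewrite (leq_trans (leq_imset_card _ _)) ?card_ord. Qed.

Lemma keyC (i : 'I_n) (E : {set 'I_n}) g : 0 < k -> i \in E -> #|E| = k ->
  (i |: img g == E) = (img g == E :\ i).
Proof.
move=> k0 iE cE; apply/eqP/eqP => h.
- have hc := img_card g.
  have := cardsU1 i (img g); rewrite h cE.
  case: (boolP (i \in img g)) => hi /=; first by move: (#|img g|) hc => X hc ?; exfalso; lia.
  by move=> _; rewrite -h setU1K.
- by rewrite h setD1K.
Qed.

Lemma img_eq_inj g (S : {set 'I_n}) : #|S| = k.-1 ->
  (img g == S) = (g \in ffun_on (mem S)) && injectiveb g.
Proof.
move=> cS; apply/eqP/andP.
- move=> h; split.
    by apply/ffun_onP => t; rewrite -h; apply: imset_f.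
  apply/injectiveP => t1 t2 e.
  have : #|img g| == #|'I_k.-1| by rewrite h cS card_ord.
  by move/imset_injP => /(_ t1 t2); apply.
- case=> /ffun_onP hon /injectiveP hinj.
  apply/eqP; rewrite eqEcard; apply/andP; split.
    by apply/subsetP => v /imsetP [t _ ->]; apply: hon.
  by rewrite cS card_imset ?card_ord.
Qed.

Lemma card_img_eq (S : {set 'I_n}) : #|S| = k.-1 ->
  #|[set g : {ffun 'I_k.-1 -> 'I_n} | img g == S]| = (k.-1)`!.
Proof.
move=> cS; rewrite -ffactnn.
have := card_inj_ffuns_on 'I_k.-1 (mem S); rewrite card_ord.
have -> : #|mem S| = k.-1 by rewrite -cS.
move=> <-; apply: eq_card => g; rewrite !inE img_eq_inj //.
Qed.

Local Open Scope ring_scope.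
Lemma prod_img (R : comNzRingType) (x : 'I_n -> R) g (S : {set 'I_n}) :
  #|S| = k.-1 -> img g == S ->
  \prod_(t : 'I_k.-1) x (g t) = \prod_(v in S) x v.
Proof.
move=> cS h; have := h; rewrite img_eq_inj // => /andP [_ /injectiveP hinj].
rewrite -(eqP h) big_imset //; exact: in2W.
Qed.

Local Close Scope ring_scope.
End Comb.

Local Open Scope ring_scope.
Lemma tappD (R : realType) k n (A B : tensor R k n) x i :
  tapp (fun i g => A i g + B i g) x i = tapp A x i + tapp B x i.
Proof. by rewrite /tapp -big_split; apply: eq_bigr => g _; rewrite mulrDl. Qed.

Lemma tappB (R : realType) k n (A B : tensor R k n) x i :
  tapp (fun i g => A i g - B i g) x i = tapp A x i - tapp B x i.
Proof. by rewrite /tapp -sumrB; apply: eq_bigr => g _; rewrite mulrBl. Qed.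

Lemma adj_ge0 (R : realType) k s m i g : 0 <= @scyc_adj R k s m i g.
Proof. by rewrite /scyc_adj; case: ifP => // _; rewrite invr_ge0. Qed.

Lemma degt_ge0 (R : realType) k s m i g : 0 <= @scyc_degt R k s m i g.
Proof. by rewrite /scyc_degt; case: ifP. Qed.
Local Close Scope ring_scope.

Local Open Scope ring_scope.
Lemma tapp_degt (R : realType) k s m (x : 'I_(scyc_n k s m) -> R) i :
  tapp (@scyc_degt R k s m) x i = (scyc_deg i)%:R * x i ^+ k.-1.
Proof.
rewrite /tapp /scyc_degt (bigD1 [ffun => i]) //= [X in _ + X]big1 ?addr0.
  rewrite ifT; last by apply/forallP => t; rewrite ffunE.
  by congr (_ * _); rewrite (eq_bigr (fun _ => x i)) ?prodr_const ?card_ord // => t _; rewrite ffunE.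
move=> g ng; rewrite ifF ?mul0r //; apply/negbTE/negP => /forallP h.
by move: ng; rewrite (_ : g = [ffun => i]) ?eqxx //; apply/ffunP => t; rewrite ffunE; apply/eqP.
Qed.

Lemma prod_blk (R : comNzRingType) (F : nat -> R) d q r : (0 < d)%N -> (r <= d)%N ->
  \prod_(t < q * d + r) F (t %% d)%N = (\prod_(t < d) F t) ^+ q * \prod_(t < r) F t.
Proof.
move=> d0 rd; elim: q => [|q IH].
  by rewrite mul0n add0n expr0 mul1r; apply: eq_bigr => t _; rewrite modn_small // (leq_trans (ltn_ord t)).
rewrite mulSn -addnA big_split_ord /= exprS -mulrA -IH; congr (_ * _).
  by apply: eq_bigr => t _; rewrite modn_small.
by apply: eq_bigr => t _; rewrite modnDl.
Qed.
Local Close Scope ring_scope.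

Section Cyc.
Variables (k s m : nat).
Local Notation d := (k - s).
Local Notation n := (scyc_n k s m).
Hypothesis Hd : 0 < d.
Hypothesis Hkn : k < n.

Lemma n_gt0 : 0 < n. Proof. by apply: leq_ltn_trans Hkn. Qed.

Lemma mod_shift a b : (a + b * n) %% n = a %% n.
Proof. by rewrite addnC modnMDl. Qed.

Definition wj (v : nat) j := (v + (n - j * d) + n.-1) %% n.

Lemma mem_edge j (v : 'I_n) : j * d <= n ->
  (v \in scyc_edge k s m j) = (wj v j < k).
Proof.
move=> hj; rewrite inE /wj; have n0 := n_gt0.
move: (j * d) hj => J hJ.
apply/existsP/idP.
- case=> t /eqP ht; rewrite -ht -addnA modnDml.
  have -> : J + t.+1 + (n - J + n.-1) = t + 2 * n by lia.
  by rewrite mod_shift modn_small // (ltn_trans (ltn_ord t) Hkn).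
- move=> hw; exists (Ordinal hw); apply/eqP => /=.
  rewrite addnS -addSn modnDmr.
  have -> : J.+1 + (v + (n - J) + n.-1) = v + 2 * n by lia.
  by rewrite mod_shift modn_small.
Qed.


Definition vtx j (t : 'I_k) : 'I_n := Ordinal (ltn_pmod (j * d + t.+1) n_gt0).

Lemma wj_vtx j (t : 'I_k) : j * d <= n -> wj (vtx j t) j = t.
Proof.
move=> hj; rewrite /wj /=; have n0 := n_gt0.
move: (j * d) hj => J hJ.
rewrite -addnA modnDml.
have -> : J + t.+1 + (n - J + n.-1) = t + 2 * n by lia.
by rewrite mod_shift modn_small // (ltn_trans (ltn_ord t) Hkn).
Qed.

Lemma edge_imset j : scyc_edge k s m j = [set vtx j t | t : 'I_k].
Proof.
apply/setP => v; rewrite !inE; apply/existsP/imsetP.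
- by case=> t /eqP ht; exists t => //; apply: val_inj; rewrite /= ht.
- by case=> t _ ->; exists t.
Qed.

Lemma vtx_inj j : j * d <= n -> injective (vtx j).
Proof.
move=> hj t1 t2 h; have := congr1 (fun v : 'I_n => wj v j) h.
by rewrite /= !wj_vtx // => e; apply: val_inj.
Qed.

Lemma card_edge j : j * d <= n -> #|scyc_edge k s m j| = k.
Proof.
move=> hj; rewrite edge_imset card_imset ?card_ord //; exact: vtx_inj.
Qed.

Lemma nE : n = m * d. Proof. by []. Qed.

Lemma jd_lt (j : 'I_m) : j * d < n.
Proof. by rewrite nE ltn_pmul2r. Qed.

Lemma edge_inj (j j' : 'I_m) :
  scyc_edge k s m j = scyc_edge k s m j' -> j = j'.
Proof.
wlog jl : j j' / j < j'.
  move=> W h; case: (ltngtP j j') => c.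
  - exact: W.
  - by apply/esym/W.
  - exact: val_inj.
move=> he; exfalso.
have h1 := jd_lt j; have h2 := jd_lt j'.
have h12 : j * d < j' * d by rewrite ltn_pmul2r.
have n0 := n_gt0.
have k0 : 0 < k by lia.
have A := mem_edge j' (vtx j (Ordinal k0)) (ltnW h2).
rewrite -he (mem_edge _ _ (ltnW h1)) wj_vtx ?(ltnW h1) // k0 /wj /= in A.
have B := mem_edge j' (Ordinal h1) (ltnW h2).
rewrite -he (mem_edge _ _ (ltnW h1)) /wj /= in B.
move: (j * d) (j' * d) h1 h2 h12 A B => J J' h1 h2 h12 A B.
rewrite -addnA modnDml in A.
have e1 : J + 1 + (n - J' + n.-1) = (n - (J' - J)) + 1 * n by lia.
have e2 : J + (n - J) + n.-1 = n.-1 + 1 * n by lia.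
have e3 : J + (n - J') + n.-1 = (n - (J' - J) - 1) + 1 * n by lia.
rewrite e1 mod_shift modn_small in A; last by lia.
rewrite e2 e3 !mod_shift !modn_small in B; lia.
Qed.

Definition pos (v : nat) := ((v + n.-1) %% n) %% d.

Lemma dvd_dn : d %| n. Proof. by rewrite nE dvdn_mull. Qed.

Lemma pos_vtx j t : pos (vtx j t) = t %% d.
Proof.
rewrite /pos /= modnDml (modn_dvdm _ dvd_dn).
have -> : j * d + t.+1 + n.-1 = t + (j + m) * d.
  rewrite mulnDl -nE; have := n_gt0; lia.
by rewrite addnC modnMDl.
Qed.

Lemma modn_blk e p : p < d -> (e * d + p) %% (m * d) = (e %% m) * d + p.
Proof.
move=> hp; rewrite {1}(divn_eq e m) mulnDl -mulnA -addnA modnMDl.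
rewrite modn_small // -nE.
have hm : e %% m < m.
  rewrite ltn_mod; case: m Hkn => //; rewrite /scyc_n mul0n.
have : (e %% m).+1 * d <= m * d by rewrite leq_mul2r hm orbT.
rewrite mulSn nE; lia.
Qed.

Lemma mem_edge2 (j : 'I_m) (v : 'I_n) : (v \in scyc_edge k s m j) =
  (((v + n.-1) %% n %/ d + m - j) %% m * d + pos v < k).
Proof.
rewrite (mem_edge _ _ (ltnW (jd_lt j))) /wj /pos.
rewrite -[v + (n - j * d) + n.-1]addnAC -modnDml.
set u := (v + n.-1) %% n.
have hu : u < n by rewrite ltn_pmod ?n_gt0.
have hc : u %/ d < m by rewrite ltn_divLR.
have hj := ltn_ord j.
have -> : u + (n - j * d) = (u %/ d + m - j) * d + u %% d.
  rewrite mulnBl mulnDl -nE {1}(divn_eq u d).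
  have : j * d <= m * d by rewrite leq_mul2r (ltnW hj) orbT.
  rewrite -nE; move: (u %/ d * d) (u %% d) (j * d) => A B C; lia.
by rewrite nE modn_blk ?ltn_pmod.
Qed.

Lemma m_gt0 : 0 < m. Proof. by case: m Hkn; rewrite /scyc_n ?mul0n. Qed.

Lemma count_blk q r p K : p < d -> r < d -> q < m -> K = q * d + r ->
  \sum_(e < m) ((e * d + p < K) : nat) = q + (p < r).
Proof.
move=> hp hr hq ->.
rewrite -(big_mkord xpredT (fun e => ((e * d + p < q * d + r) : nat))).
rewrite (@big_cat_nat _ _ _ q 0 m) //=; last exact: ltnW.
rewrite (@big_cat_nat _ _ _ q.+1 q m) //= big_nat1 ltn_add2l.
have -> : \sum_(0 <= e < q) ((e * d + p < q * d + r) : nat) = \sum_(0 <= e < q) 1.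
  apply: eq_big_nat => e /andP [_ he].
  have : e.+1 * d <= q * d by rewrite leq_mul2r he orbT.
  rewrite mulSn; move: (e * d) (q * d) => A B h.
  have -> : A + p < B + r by lia. by [].
rewrite sum_nat_const_nat subn0 muln1.
rewrite big1_seq ?addn0 // => e /andP [_]; rewrite mem_index_iota => /andP [he _].
have : q.+1 * d <= e * d by rewrite leq_mul2r he orbT.
rewrite mulSn; move: (e * d) (q * d) => A B h.
have -> : (A + p < B + r) = false by lia. by [].
Qed.

Lemma deg_val q r (v : 'I_n) : k = q * d + r -> r < d ->
  scyc_deg v = q + (pos v < r).
Proof.
move=> hk hr; rewrite /scyc_deg.
have hq : q < m.
  have : q * d < m * d by rewrite -nE; apply: leq_ltn_trans Hkn; lia.
  by rewrite ltn_pmul2r.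
set c := (v + n.-1) %% n %/ d.
have hc : c < m.
  by rewrite ltn_divLR // -nE ltn_pmod ?n_gt0.
have m0 := m_gt0.
have hcdef : c = (v + n.-1) %% n %/ d by [].
clearbody c.
pose h (j : 'I_m) : 'I_m := Ordinal (ltn_pmod (c + m - j) m0).
have hh : forall j, h (h j) = j.
  move=> j; apply: val_inj => /=; have hj := ltn_ord j.
  case: (leqP j c) => cj.
  - have -> : c + m - j = (c - j) + 1 * m by lia.
    rewrite [(c - j) + _]addnC modnMDl (modn_small (_ : c - j < m)); last by lia.
    have -> : c + m - (c - j) = j + 1 * m by lia.
    by rewrite [j + _]addnC modnMDl modn_small.
  - rewrite (modn_small (_ : c + m - j < m)); last by lia.
    have -> : c + m - (c + m - j) = j by lia.
    by rewrite modn_small.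
have hp : pos v < d by rewrite /pos ltn_pmod.
rewrite -sum1dep_card big_mkcond /= -(count_blk q r (pos v) k hp hr hq hk) (reindex_inj (can_inj hh)) /=.
apply: eq_bigr => j _.
have := mem_edge2 (h j) v; rewrite -hcdef /= => ->.
have := congr1 val (hh j); rewrite /= => ->.
by case: (_ < _).
Qed.

Local Notation img g := [set (g : {ffun 'I_k.-1 -> 'I_n}) t | t : 'I_k.-1].
Local Notation e j := (scyc_edge k s m j).

Lemma k_gt0 : 0 < k. Proof. lia. Qed.

Lemma cE (j : 'I_m) : #|e j| = k. Proof. exact: card_edge (ltnW (jd_lt j)). Qed.

Lemma cED (j : 'I_m) i : i \in e j -> #|e j :\ i| = k.-1.
Proof. by move=> h; have := cardsD1 i (e j); rewrite h cE; lia. Qed.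

Local Open Scope ring_scope.
Lemma tapp_adj (R : realType) (x : 'I_n -> R) (i : 'I_n) :
  tapp (@scyc_adj R k s m) x i =
  \sum_(j : 'I_m | i \in e j) \prod_(v in e j :\ i) x v.
Proof.
rewrite /tapp /scyc_adj; have k0 := k_gt0.
set c : R := ((k.-1)`!%:R)^-1.
have step : forall g : {ffun 'I_k.-1 -> 'I_n},
  (if [exists j : 'I_m, (i |: img g) == e j] then c else 0) * \prod_(t < k.-1) x (g t)
  = \sum_(j : 'I_m | i \in e j)
      (if img g == e j :\ i then c * \prod_(v in e j :\ i) x v else 0).
  move=> g; have KC := fun (j : 'I_m) (ij : i \in e j) => @keyC k n i (e j) g k0 ij (cE j).
  case: existsP => [[j0 /eqP hj0] | hno].
  - have i0 : i \in e j0 by rewrite -hj0 setU11.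
    rewrite (bigD1 j0) //= -(KC j0 i0) hj0 eqxx.
    rewrite [X in _ = _ + X]big1 ?addr0; last first.
      move=> j /andP [ij nj]; case: ifP => // himg.
      move: himg; rewrite -(KC j ij) hj0 => /eqP /edge_inj hj.
      by move: nj; rewrite hj eqxx.
    congr (_ * _); apply: (@prod_img k n); first exact: cED.
    by rewrite -(KC j0 i0) hj0.
  - rewrite mul0r big1 // => j ij; case: ifP => // h; exfalso; apply: hno.
    by exists j; rewrite (KC j ij).
rewrite (eq_bigr _ (fun g _ => step g)) exchange_big /=; apply: eq_bigr => j ij.
rewrite -big_mkcond /= sumr_const.
have -> : #|[pred g : {ffun 'I_k.-1 -> 'I_n} | img g == e j :\ i]| = (k.-1)`!.
  rewrite -(@card_img_eq k n _ (cED j i ij)); apply: eq_card => g; rewrite !inE.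
  by [].
by rewrite -mulr_natr mulrAC mulVf ?mul1r // pnatr_eq0 -lt0n fact_gt0.
Qed.

Lemma prod_edge (R : realType) (F : nat -> R) (j : 'I_m) :
  \prod_(v in e j) F (pos v) = \prod_(t < k) F (t %% d)%N.
Proof.
rewrite edge_imset big_imset /=; last by move=> t1 t2 _ _; exact: (vtx_inj j (ltnW (jd_lt j))).
by apply: eq_bigr => t _; rewrite pos_vtx.
Qed.

Lemma tapp_adjF (R : realType) (F : nat -> R) (i : 'I_n) :
  F (pos i) != 0 ->
  tapp (@scyc_adj R k s m) (fun v => F (pos v)) i =
  (scyc_deg i)%:R * (\prod_(t < k) F (t %% d)%N / F (pos i)).
Proof.
move=> Fi; rewrite tapp_adj.
rewrite (eq_bigr (fun _ => \prod_(t < k) F (t %% d)%N / F (pos i))); last first.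
  move=> j ij; rewrite -(prod_edge _ F j) (big_setD1 _ ij) /= [F _ * _]mulrC mulfK //.
rewrite (eq_bigl (fun j => j \in [set j0 : 'I_m | i \in e j0])); last by move=> j; rewrite inE.
rewrite sumr_const mulr_natl /scyc_deg; congr (_ *+ _); apply: eq_card => j; rewrite !inE.
Qed.
Local Close Scope ring_scope.

Section Main.
Local Open Scope ring_scope.
Variables (R : realType) (q r : nat) (a : R).
Hypothesis hk : k = (q * d + r)%N.
Hypothesis hr1 : (0 < r)%N.
Hypothesis hr : (r < d)%N.
Hypothesis ha0 : 0 < a.
Hypothesis ha1 : a < 1.
Hypothesis heq : q.+1%:R * a ^+ k + a ^+ (q.+1 * r) - q%:R = 0.

Definition Fv (p : nat) : R := if (p < r)%N then 1 else a.
Definition rho : R := q.+1%:R + q.+1%:R * a ^+ (k - q.+1 * r).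

Lemma Fv_neq0 p : Fv p != 0.
Proof. by rewrite /Fv; case: ifP => _; [exact: oner_neq0 | exact: lt0r_neq0]. Qed.

Lemma Fv_gt0 p : 0 < Fv p.
Proof. by rewrite /Fv; case: ifP. Qed.

Lemma PF_val : \prod_(t < k) Fv (t %% d)%N = a ^+ (k - q.+1 * r).
Proof.
have := @prod_blk R Fv (k - s) q r Hd (ltnW hr). rewrite -hk => ->.
have -> : \prod_(t < r) Fv t = 1 by apply: big1 => t _; rewrite /Fv ltn_ord.
have -> : \prod_(t < d) Fv t = a ^+ (d - r).
  rewrite -(big_mkord xpredT Fv) (@big_cat_nat _ _ _ r 0 d) //=; last exact: ltnW.
  rewrite big_nat_cond big1 ?mul1r; last by move=> t /andP [/andP [_ ht] _]; rewrite /Fv ht.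
  rewrite (eq_big_nat _ _ (F2 := fun _ => a)) ?prodr_const_nat //.
  by move=> t /andP [ht _]; rewrite /Fv ltnNge ht.
rewrite mulr1 -exprM; congr (_ ^+ _).
have hle : (q * r <= q * (k - s))%N by rewrite leq_mul2l (ltnW hr) orbT.
move: hk hle; rewrite mulnBl mulSn (mulnC _ q) (mulnC r q).
move: (q * (k - s))%N (q * r)%N => X Y; lia.
Qed.

Lemma Q_eig i : tapp (@scyc_Q R k s m) (fun v => Fv (pos v)) i =
  rho * Fv (pos i) ^+ k.-1.
Proof.
rewrite /scyc_Q tappD tapp_degt tapp_adjF ?Fv_neq0 // PF_val.
rewrite (deg_val q r i hk hr) /Fv /rho.
case: (ltnP (pos i) r) => hp.
  by rewrite addn1 expr1n invr1 !mulr1.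
rewrite addn0.
have a0 : a != 0 by exact: lt0r_neq0.
have k0 : (0 < k)%N by lia.
have hR : (q.+1 * r <= k)%N.
  have hle : (q * r <= q * (k - s))%N by rewrite leq_mul2l (ltnW hr) orbT.
  rewrite mulSn; move: hk hle; move: (q * (k - s))%N (q * r)%N => X Y; lia.
apply: (mulIf a0); rewrite mulrDl -!mulrA (mulrC (a ^+ k.-1)) -exprS prednK // mulVf // mulr1.
have ak : a ^+ k = a ^+ (k - q.+1 * r) * a ^+ (q.+1 * r) by rewrite -exprD subnK.
move: heq; rewrite ak.
move: (a ^+ (k - q.+1 * r)) (a ^+ (q.+1 * r)) => A B.
rewrite -addn1 natrD; move: (q%:R : R) => Q h.
apply/eqP; rewrite -subr_eq0.
have -> : Q * (A * B) + Q * A - (Q + 1%:R + (Q + 1%:R) * A) * (A * B) =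
  - A * ((Q + 1%:R) * (A * B) + B - Q) by ring.
by rewrite h mulr0.
Qed.

Definition p0 : nat := if odd q then r else 0.
Definition sg (p : nat) : R := if p == p0 then -1 else 1.
Definition Gv (p : nat) : R := sg p * Fv p.

Lemma p0_lt : (p0 < d)%N.
Proof. by rewrite /p0; case: ifP. Qed.

Lemma sg_cases p : sg p = 1 \/ sg p = -1.
Proof. by rewrite /sg; case: ifP; [right | left]. Qed.

Lemma Gv_neq0 p : Gv p != 0.
Proof.
rewrite /Gv mulf_neq0 ?Fv_neq0 //; case: (sg_cases p) => ->; first exact: oner_neq0.
by rewrite oppr_eq0 oner_neq0.
Qed.

Lemma PS_val : \prod_(t < k) sg (t %% d)%N = -1.
Proof.
have := @prod_blk R sg (k - s) q r Hd (ltnW hr). rewrite -hk => ->.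
have -> : \prod_(t < d) sg t = -1.
  rewrite (bigD1 (Ordinal p0_lt)) //= /sg eqxx big1 ?mulr1 // => t ht.
  rewrite ifF //; apply/negbTE; apply: contra ht => /eqP h.
  by apply/eqP; apply: val_inj.
rewrite /sg /p0; case hq : (odd q).
  rewrite big1 ?mulr1; first by rewrite -signr_odd hq expr1.
  by move=> t _; rewrite ifF // ltn_eqF.
rewrite (bigD1 (Ordinal hr1)) //= big1 ?mulr1; last first.
  move=> t ht; rewrite ifF //; apply/negbTE; apply: contra ht => /eqP h.
  by apply/eqP; apply: val_inj.
by rewrite -signr_odd hq expr0 mul1r.
Qed.

Lemma L_eig (ke : ~~ odd k) i :
  tapp (@scyc_L R k s m) (fun v => Gv (pos v)) i = rho * Gv (pos i) ^+ k.-1.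
Proof.
have k0 : (0 < k)%N by lia.
have ok : odd k.-1 by move: ke; rewrite -{1}(prednK k0) /=; case: (odd _).
rewrite /scyc_L tappB tapp_degt tapp_adjF ?Gv_neq0 //.
have PG : \prod_(t < k) Gv (t %% d)%N = - \prod_(t < k) Fv (t %% d)%N.
  by rewrite /Gv big_split /= PS_val mulN1r.
rewrite PG.
have := Q_eig i; rewrite /scyc_Q tappD tapp_degt tapp_adjF ?Fv_neq0 // => hQ.
rewrite /Gv; case: (sg_cases (pos i)) => ->.
  by rewrite !mul1r mulNr mulrN opprK.
rewrite !mulN1r exprNn -signr_odd ok expr1 !mulN1r invrN mulrNN.
by rewrite mulrN -opprD hQ mulrN.
Qed.

Lemma main_Q : is_largest_Heig (@scyc_Q R k s m) rho.
Proof.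
split.
  exists (fun v => Fv (pos v)); split; last exact: Q_eig.
  by exists (Ordinal n_gt0); exact: Fv_neq0.
apply: (@Heig_upper R k n _ _ rho (fun v => Fv (pos v))).
- move=> i g; rewrite ger0_norm // /scyc_Q addr_ge0 ?adj_ge0 ?degt_ge0 //.
- by move=> v; exact: Fv_gt0.
- exact: Q_eig.
Qed.

Lemma main_L (ke : ~~ odd k) : is_largest_Heig (@scyc_L R k s m) rho.
Proof.
split.
  exists (fun v => Gv (pos v)); split; last exact: L_eig.
  by exists (Ordinal n_gt0); exact: Gv_neq0.
apply: (@Heig_upper R k n _ (@scyc_Q R k s m) rho (fun v => Fv (pos v))).
- move=> i g; rewrite /scyc_L /scyc_Q; apply: le_trans (ler_normB _ _) _.
  by rewrite !ger0_norm ?adj_ge0 ?degt_ge0.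
- by move=> v; exact: Fv_gt0.
- exact: Q_eig.
Qed.

End Main.

End Cyc.


Local Open Scope ring_scope.

Lemma root_exists (R : realType) (k q r : nat) : (0 < k)%N -> (0 < r)%N -> (0 < q)%N ->
  exists! a : R, 0 < a < 1 /\ q.+1%:R * a ^+ k + a ^+ (q.+1 * r) - q%:R = 0.
Proof.
move=> k0 r0 q0.
pose f (a : R) := q.+1%:R * a ^+ k + a ^+ (q.+1 * r) - q%:R.
pose p : {poly R} := (q.+1%:R)%:P * 'X^k + 'X^(q.+1 * r) - (q%:R)%:P.
have pE a : p.[a] = f a by rewrite /p /f !hornerE.
have R0 : (0 < q.+1 * r)%N by rewrite muln_gt0.
have f0 : f 0 = - q%:R by rewrite /f !expr0n !eqn0Ngt k0 R0 /= mulr0 !add0r.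
have f1 : f 1 = 2%:R.
  rewrite /f !expr1n mulr1 -addn1 natrD.
  by ring.
have hq : 0 < q%:R :> R by rewrite ltr0n.
have [x /andP [x0 x1] rx] : exists2 x, (0 : R) <= x <= 1 & root p x.
  apply: Num.Theory.poly_ivt; first exact: ler01.
  by rewrite !pE f0 f1 oppr_le0 ltW //= ler0n.
have fx : f x = 0 by rewrite -pE; apply/eqP.
have xn0 : x != 0 by apply: contra_eq_neq fx => ->; rewrite f0 oppr_eq0 gt_eqF.
have xn1 : x != 1 by apply: contra_eq_neq fx => ->; rewrite f1 pnatr_eq0.
have fmono : forall a b : R, 0 <= a -> a < b -> f a < f b.
  move=> a b a0 ab; rewrite /f ltrD2r ltrD // ?ltr_pM2l ?ltr0n //.
    by rewrite ltrXn2r // -lt0n.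
  by rewrite ltrXn2r // -lt0n.
exists x; split.
  by split => //; rewrite lt_neqAle eq_sym xn0 x0 lt_neqAle xn1 x1.
move=> y [/andP [y0 y1] fy]; apply/eqP; rewrite eq_le.
case: (ltgtP x y) => // [xy|yx].
  by have := fmono _ _ x0 xy; rewrite fx (_ : f y = 0) // ltxx.
by have := fmono _ _ (ltW y0) yx; rewrite fx (_ : f y = 0) // ltxx.
Qed.

Theorem theorem5p2 (R : realType) (k s m q r : nat) :
  (3 <= k)%N -> (k < 2 * s)%N -> (s < k.-1)%N ->
  (2 * k - s <= scyc_n k s m)%N ->
  k = (q * (k - s) + r)%N -> (1 <= r)%N -> (r < k - s)%N ->
  (exists! a : R, 0 < a < 1 /\
      q.+1%:R * a ^+ k + a ^+ (q.+1 * r) - q%:R = 0) /\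
  (forall a : R, 0 < a < 1 ->
      q.+1%:R * a ^+ k + a ^+ (q.+1 * r) - q%:R = 0 ->
      is_largest_Heig (@scyc_Q R k s m)
        (q.+1%:R + q.+1%:R * a ^+ (k - q.+1 * r)) /\
      (~~ odd k -> is_largest_Heig (@scyc_L R k s m)
        (q.+1%:R + q.+1%:R * a ^+ (k - q.+1 * r)))).
Proof.
move=> k3 ks sk hn hk r1 hr.
have Hd : (0 < k - s)%N by lia.
have Hkn : (k < scyc_n k s m)%N by move: hn; move: (scyc_n k s m) => N; lia.
have q0 : (0 < q)%N.
  case: q hk => // hk; rewrite mul0n add0n in hk; lia.
split; first by apply: root_exists => //; lia.
move=> a /andP [a0 a1] heq; split.
  by have := main_Q k s m Hd Hkn R q r a hk r1 hr a0 a1 heq; rewrite /rho.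
by move=> ke; have := main_L k s m Hd Hkn R q r a hk r1 hr a0 a1 heq ke; rewrite /rho.
Qed.
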